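(* Consider the setting described in the context. Minimizing the cost $I[S^K;Z^K]-h[H]$ over the variables $\Sigma^H>0$, $\Sigma^Z_K>0$ and block-diagonal $\tilde G_K=\mathrm{diag}(G(1),\dots,G(K))$ is equivalent to solving the following convex program: $$\min_{\Sigma^H,\ \Pi_K,\ \Sigma^Z_K,\ \tilde G_K}\ -\log\det(\Sigma^H)-\log\det(\Pi_K)\quad\text{s.t.}\quad \Pi_K\ge 0,\quad \begin{bmatrix}\Sigma^S_K-\Pi_K & (\Sigma^{SZ}_K)^\top\\ \Sigma^{SZ}_K & \Sigma^Z_K\end{bmatrix}\ge 0,$$ where $\Sigma^{SZ}_K=\tilde G_K\tilde C_KQ\tilde D_K^\top$ and $\Pi_K\in\mathbb{R}^{Kn_s\times Kn_s}$ is symmetric.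
   Context: Let $n_x,n_y,n_u,n_s,K\in\mathbb{N}$, $K\ge2$. Consider the system $X(k+1)=AX(k)+BU(k)+T(k)$, $Y(k)=CX(k)+W(k)$, $S(k)=DX(k)$ with $X(k)\in\mathbb{R}^{n_x}$, $Y(k)\in\mathbb{R}^{n_y}$, deterministic $U(k)\in\mathbb{R}^{n_u}$, $S(k)\in\mathbb{R}^{n_s}$, $D$ of full row rank; $T(k)$, $W(k)$ i.i.d. zero-mean Gaussian with covariances $\Sigma^T>0$, $\Sigma^W>0$; $X(1)\sim\mathcal{N}[\mu^X_1,\Sigma^X_1]$, $\Sigma^X_1>0$; all mutually independent. The disclosed output is $Z(k)=G(k)Y(k)+V(k)$ with $G(k)\in\mathbb{R}^{n_y\times n_y}$ deterministic and $V^K=(V(1)^\top,\dots,V(K)^\top)^\top$ zero-mean Gaussian, independent of everything else; the disclosed input is $R(k)=U(k)+H(k)$ where the stacked input noise $H\in\mathbb{R}^m$ is zero-mean Gaussian with covariance $\Sigma^H>0$, independent of everything else. Stacked vectors $Z^K,S^K$ collect $Z(1),\dots,Z(K)$ and $S(1),\dots,S(K)$. Let $\tilde C_K=I_K\otimes C$, $\tilde D_K=I_K\otimes D$, $F_K=\begin{bmatrix} I & A^\top &\cdots & (A^\top)^{K-1}\end{bmatrix}^\top$, $J_K\in\mathbb{R}^{Kn_x\times(K-1)n_x}$ with $(i,j)$ block $A^{i-j-1}$ if $i>j$ ($A^0=I$) and $\mathbf{0}$ otherwise, and $Q=F_K\Sigma^X_1F_K^\top+J_K(I_{K-1}\otimes\Sigma^T)J_K^\top$.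 Then $\Sigma^S_K=\tilde D_KQ\tilde D_K^\top$ is the covariance of $S^K$, $\Sigma^{SZ}_K=\tilde G_K\tilde C_KQ\tilde D_K^\top$ is the cross-covariance of $Z^K$ and $S^K$, and $\Sigma^Z_K$ denotes the covariance of $Z^K$ (which determines the covariance of $V^K$ via $\Sigma^V_K=\Sigma^Z_K-\tilde G_K(\tilde C_KQ\tilde C_K^\top+I_K\otimes\Sigma^W)\tilde G_K^\top$). Since all vectors are jointly Gaussian, the mutual information and differential entropy (logarithms base 2) are $I[S^K;Z^K]=\tfrac12\log\det\Sigma^S_K-\tfrac12\log\det\big(\Sigma^S_K-(\Sigma^{SZ}_K)^\top(\Sigma^Z_K)^{-1}\Sigma^{SZ}_K\big)$ and $h[H]=\tfrac12\log\det\Sigma^H+\tfrac m2+\tfrac m2\log(2\pi)$; the cost is regarded as a function of $(\Sigma^H,\Sigma^Z_K,\tilde G_K)$ through these formulas. *)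

(* Defs.v *)
From mathcomp Require Import all_boot all_order all_algebra.
From mathcomp Require Import all_classical all_reals all_analysis.
Set Implicit Arguments. Unset Strict Implicit. Unset Printing Implicit Defensive.
Import Order.TTheory GRing.Theory Num.Theory.
Local Open Scope ring_scope.

Section Defs.
Variable R : realType.

Definition log2 (x : R) : R := ln x / ln 2.

(* Block decomposition of an index of a stacked vector 'I_(K * n):
   (block number, position inside the block); inverse of mxvec_index,
   i.e. the standard stacking  k = block * n + position. *)
Definition blk_of {K n : nat} (k : 'I_(K * n)) : 'I_K * 'I_n :=
  enum_val (cast_ord (esym (mxvec_cast K n)) k).

Definition blockmx {K L p q : nat} (Bf : 'I_K -> 'I_L -> 'M[R]_(p, q))
  : 'M[R]_(K * p, L * q) :=
  \matrix_(i, j) Bf (blk_of i).1 (blk_of j).1 (blk_of i).2 (blk_of j).2.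

Definition kronI (K : nat) {p q : nat} (M : 'M[R]_(p, q)) : 'M[R]_(K * p, K * q) :=
  blockmx (fun a b : 'I_K => if a == b then M else 0).

Definition blockdiag {K n : nat} (G : 'M[R]_(K * n)) : Prop :=
  forall i j : 'I_(K * n), (blk_of i).1 != (blk_of j).1 -> G i j = 0.

Definition psd {n : nat} (M : 'M[R]_n) : Prop :=
  M^T = M /\ forall x : 'cV[R]_n, 0 <= (x^T *m M *m x) 0 0.
Definition posdef {n : nat} (M : 'M[R]_n) : Prop :=
  M^T = M /\ forall x : 'cV[R]_n, x != 0 -> 0 < (x^T *m M *m x) 0 0.

Definition FK (K : nat) {nx : nat} (A : 'M[R]_nx) : 'M[R]_(K * nx, nx) :=
  \matrix_(i, j) (A ^+ (blk_of i).1) (blk_of i).2 j.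

Definition JK (K : nat) {nx : nat} (A : 'M[R]_nx) : 'M[R]_(K * nx, K.-1 * nx) :=
  blockmx (fun (a : 'I_K) (b : 'I_K.-1) =>
             if (b < a)%N then A ^+ (a - b - 1)%N else 0).

Definition Qmat (K : nat) {nx : nat} (A S1 ST : 'M[R]_nx) : 'M[R]_(K * nx) :=
  FK K A *m S1 *m (FK K A)^T + JK K A *m kronI K.-1 ST *m (JK K A)^T.

Definition SigmaS (K : nat) {nx ns : nat} (A S1 ST : 'M[R]_nx) (D : 'M[R]_(ns, nx))
  : 'M[R]_(K * ns) :=
  kronI K D *m Qmat K A S1 ST *m (kronI K D)^T.

Definition SigmaSZ (K : nat) {nx ny ns : nat} (A S1 ST : 'M[R]_nx)
  (C : 'M[R]_(ny, nx)) (D : 'M[R]_(ns, nx)) (G : 'M[R]_(K * ny))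
  : 'M[R]_(K * ny, K * ns) :=
  G *m kronI K C *m Qmat K A S1 ST *m (kronI K D)^T.

(* I[S^K; Z^K] via the Gaussian formula (base 2) *)
Definition mutinfo {N M : nat} (SS : 'M[R]_N) (SSZ : 'M[R]_(M, N)) (SZ : 'M[R]_M) : R :=
  log2 (\det SS) / 2 - log2 (\det (SS - SSZ^T *m invmx SZ *m SSZ)) / 2.

(* h[H] for H ~ N(0, SH), H in R^m *)
Definition entropyH {m : nat} (SH : 'M[R]_m) : R :=
  log2 (\det SH) / 2 + m%:R / 2 + m%:R / 2 * log2 (2 * pi).

Definition cost {m N M : nat} (SH : 'M[R]_m) (SS : 'M[R]_N) (SSZ : 'M[R]_(M, N))
  (SZ : 'M[R]_M) : R :=
  mutinfo SS SSZ SZ - entropyH SH.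

Definition prog_feasible {N M : nat} (SS : 'M[R]_N) (SSZ : 'M[R]_(M, N))
  (SZ : 'M[R]_M) (Pi : 'M[R]_N) : Prop :=
  Pi^T = Pi /\ psd Pi /\ psd (block_mx (SS - Pi) SSZ^T SSZ SZ).

Definition prog_obj {m N : nat} (SH : 'M[R]_m) (Pi : 'M[R]_N) : R :=
  - log2 (\det SH) - log2 (\det Pi).

End Defs.

Arguments FK {R} K {nx}.
Arguments JK {R} K {nx}.
Arguments kronI {R} K {p q}.
Arguments Qmat {R} K {nx}.
Arguments SigmaS {R} K {nx ns}.
Arguments SigmaSZ {R} K {nx ny ns}.

(* Main.v *)
Require Import Defs.
From mathcomp Require Import all_boot all_order all_algebra.
From mathcomp Require Import all_classical all_reals all_analysis.
From mathcomp Require Import lra ring.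
Import Order.TTheory GRing.Theory Num.Theory.
Local Open Scope ring_scope.

Section Aux.
Variable R : realType.

Lemma addE m n (A B : 'M[R]_(m, n)) i j : (A + B) i j = A i j + B i j.
Proof. by rewrite mxE. Qed.
Lemma oppE m n (A : 'M[R]_(m, n)) i j : (- A) i j = - A i j.
Proof. by rewrite mxE. Qed.

Lemma trZ m n (t : R) (A : 'M[R]_(m, n)) : (t *: A)^T = t *: A^T.
Proof. by apply/matrixP=> i j; rewrite !mxE. Qed.

Lemma scaleE m n (t : R) (A : 'M[R]_(m, n)) i j : (t *: A) i j = t * A i j.
Proof. by rewrite !mxE. Qed.

Lemma form_block p q (u : 'cV[R]_p) (v : 'cV[R]_q) a b c d :
  (col_mx u v)^T *m block_mx a b c d *m col_mx u v =
  u^T *m a *m u + u^T *m b *m v + (v^T *m c *m u + v^T *m d *m v).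
Proof.
by rewrite tr_col_mx mul_row_block mul_row_col !mulmxDl addrACA.
Qed.

Lemma form_add n (u w : 'cV[R]_n) Z :
  (u + w)^T *m Z *m (u + w) =
  u^T *m Z *m u + u^T *m Z *m w + (w^T *m Z *m u + w^T *m Z *m w).
Proof.
have -> : (u + w)^T = u^T + w^T by apply/matrixP=> i j; rewrite !mxE.
by rewrite !mulmxDr !mulmxDl addrACA.
Qed.

Lemma schurTL p q (Z : 'M[R]_p) (B : 'M[R]_(p, q)) (A : 'M[R]_q)
  (u : 'cV[R]_p) (v : 'cV[R]_q) :
  Z \in unitmx -> Z^T = Z ->
  ((col_mx u v)^T *m block_mx Z B B^T A *m col_mx u v) 0 0 =
  ((u + invmx Z *m B *m v)^T *m Z *m (u + invmx Z *m B *m v)) 0 0 +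
  (v^T *m (A - B^T *m invmx Z *m B) *m v) 0 0.
Proof.
move=> Zu ZT; rewrite form_block form_add.
have WT : (invmx Z)^T = invmx Z by rewrite trmx_inv ZT.
have e1 : u^T *m Z *m (invmx Z *m B *m v) = u^T *m B *m v.
  by rewrite !mulmxA -(mulmxA u^T) mulmxV // mulmx1.
have e2 : (invmx Z *m B *m v)^T *m Z *m u = v^T *m B^T *m u.
  by rewrite !trmx_mul WT !mulmxA -(mulmxA _ (invmx Z)) mulVmx // mulmx1.
have e3 : (invmx Z *m B *m v)^T *m Z *m (invmx Z *m B *m v)
   = v^T *m (B^T *m invmx Z *m B) *m v.
  rewrite !trmx_mul WT !mulmxA -(mulmxA _ (invmx Z) Z) mulVmx // mulmx1.
  by rewrite -!mulmxA.
rewrite e1 e2 e3 mulmxBr mulmxBl !addE !oppE.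
set x1 := (_ *m _) 0 0; set x2 := (_ *m _) 0 0; set x3 := (_ *m _) 0 0.
set x4 := (_ *m _) 0 0; set x5 := (_ *m _) 0 0.
lra.
Qed.


Lemma schurBR p q (Z : 'M[R]_q) (B : 'M[R]_(q, p)) (A : 'M[R]_p)
  (u : 'cV[R]_p) (v : 'cV[R]_q) :
  Z \in unitmx -> Z^T = Z ->
  ((col_mx u v)^T *m block_mx A B^T B Z *m col_mx u v) 0 0 =
  (u^T *m (A - B^T *m invmx Z *m B) *m u) 0 0 +
  ((v + invmx Z *m B *m u)^T *m Z *m (v + invmx Z *m B *m u)) 0 0.
Proof.
move=> Zu ZT; rewrite form_block form_add.
have WT : (invmx Z)^T = invmx Z by rewrite trmx_inv ZT.
have e1 : v^T *m Z *m (invmx Z *m B *m u) = v^T *m B *m u.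
  by rewrite !mulmxA -(mulmxA v^T) mulmxV // mulmx1.
have e2 : (invmx Z *m B *m u)^T *m Z *m v = u^T *m B^T *m v.
  by rewrite !trmx_mul WT !mulmxA -(mulmxA _ (invmx Z)) mulVmx // mulmx1.
have e3 : (invmx Z *m B *m u)^T *m Z *m (invmx Z *m B *m u)
   = u^T *m (B^T *m invmx Z *m B) *m u.
  rewrite !trmx_mul WT !mulmxA -(mulmxA _ (invmx Z) Z) mulVmx // mulmx1.
  by rewrite -!mulmxA.
rewrite e1 e2 e3 mulmxBr mulmxBl !addE !oppE.
set x1 := (_ *m _) 0 0; set x2 := (_ *m _) 0 0; set x3 := (_ *m _) 0 0.
set x4 := (_ *m _) 0 0; set x5 := (_ *m _) 0 0.
lra.
Qed.

Lemma det_schur p q (Z : 'M[R]_p) (B : 'M[R]_(p, q)) (C : 'M[R]_(q, p)) (A : 'M[R]_q) :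
  Z \in unitmx ->
  \det (block_mx Z B C A) = \det Z * \det (A - C *m invmx Z *m B).
Proof.
move=> Zu.
have -> : block_mx Z B C A =
  block_mx 1%:M 0 (C *m invmx Z) 1%:M *m block_mx Z B 0 (A - C *m invmx Z *m B).
  rewrite mulmx_block !mul1mx !mul0mx !addr0.
  by rewrite -mulmxA mulVmx // mulmx1 addrC subrK.
by rewrite det_mulmx det_lblock det_ublock !det1 !mul1r.
Qed.

Lemma posdef_psd n (P : 'M[R]_n) : posdef P -> psd P.
Proof.
case=> PT HP; split=> // x; case: (eqVneq x 0) => [->|/HP/ltW //].
by rewrite trmx0 !mul0mx mxE.
Qed.

Lemma posdef_unit n (P : 'M[R]_n) : posdef P -> P \in unitmx.
Proof.
case=> PT HP; rewrite unitmxE unitfE; apply/negP => /det0P [v v0 vP].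
have := HP v^T; rewrite trmx_eq0 => /(_ v0).
by rewrite trmxK vP mul0mx mxE ltxx.
Qed.


Lemma psd_unit_posdef n (P : 'M[R]_n) : psd P -> P \in unitmx -> posdef P.
Proof.
case=> PT HP Pu; split=> // x x0.
rewrite lt_def HP andbT; apply/negP => /eqP f0.
have Px : P *m x = 0.
  apply/matrixP => i j; rewrite (ord1 j) [RHS]mxE.
  pose y : 'cV[R]_n := delta_mx i 0.
  have ey : (y^T *m P *m x) 0 0 = (P *m x) i 0.
    by rewrite -mulmxA /y trmx_delta -rowE mxE.
  set s := (P *m x) i 0; set c := (y^T *m P *m y) 0 0.
  have c0 : 0 <= c by exact: HP.
  have sym : (x^T *m P *m y) 0 0 = s.
    have -> : (x^T *m P *m y) 0 0 = ((x^T *m P *m y)^T) 0 0 by rewrite [RHS]mxE.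
    by rewrite !trmx_mul trmxK PT mulmxA ey.
  have key t : 0 <= 2 * t * s + t ^+ 2 * c.
    have := HP (x + t *: y); rewrite form_add !addE f0 add0r.
    have -> : (x^T *m P *m (t *: y)) 0 0 = t * s by rewrite -scalemxAr scaleE sym.
    have -> : ((t *: y)^T *m P *m x) 0 0 = t * s.
      by rewrite trZ -!scalemxAl scaleE ey.
    have -> : ((t *: y)^T *m P *m (t *: y)) 0 0 = t ^+ 2 * c.
      by rewrite trZ -!scalemxAl -scalemxAr !scaleE mulrA expr2.
    by move=> h; nra.
  set k := (c + 1)^-1.
  have kp : 0 < k by rewrite invr_gt0; lra.
  have kc : k * (c + 1) = 1 by rewrite mulVf // lt0r_neq0 //; lra.
  have kc' : k * c = 1 - k by move: kc; rewrite mulrDr mulr1 => kc; lra.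
  have := key (- s * k).
  have -> : 2 * (- s * k) * s + (- s * k) ^+ 2 * c = s ^+ 2 * k * (- 2 + k * c) by ring.
  rewrite kc' => h.
  have s2 : s ^+ 2 <= 0.
    have hk : 0 < k * (1 + k) by apply: mulr_gt0 => //; lra.
    have : (s ^+ 2) * (k * (1 + k)) <= 0 by move: h; rewrite mulrA; nra.
    by rewrite pmulr_lle0.
  have : s ^+ 2 = 0 by apply/eqP; rewrite eq_le s2 sqr_ge0.
  by move/eqP; rewrite sqrf_eq0 => /eqP.
have := mulKmx Pu x; rewrite Px mulmx0 => x0'.
by move: x0; rewrite -x0' eqxx.
Qed.

Lemma trD m n (A B : 'M[R]_(m, n)) : (A + B)^T = A^T + B^T.
Proof. by apply/matrixP=> i j; rewrite !mxE. Qed.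
Lemma trB m n (A B : 'M[R]_(m, n)) : (A - B)^T = A^T - B^T.
Proof. by apply/matrixP=> i j; rewrite !mxE. Qed.

Lemma sym_schur p q (Z : 'M[R]_p) (B : 'M[R]_(p, q)) (A : 'M[R]_q) :
  Z^T = Z -> A^T = A -> (A - B^T *m invmx Z *m B)^T = A - B^T *m invmx Z *m B.
Proof.
move=> ZT AT; by rewrite trB AT !trmx_mul trmxK trmx_inv ZT mulmxA.
Qed.

Lemma sym_blockTL p q (Z : 'M[R]_p) (B : 'M[R]_(p, q)) (A : 'M[R]_q) :
  Z^T = Z -> A^T = A -> (block_mx Z B B^T A)^T = block_mx Z B B^T A.
Proof. by move=> ZT AT; rewrite tr_block_mx ZT AT trmxK. Qed.

Lemma sym_blockBR p q (Z : 'M[R]_q) (B : 'M[R]_(q, p)) (A : 'M[R]_p) :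
  Z^T = Z -> A^T = A -> (block_mx A B^T B Z)^T = block_mx A B^T B Z.
Proof. by move=> ZT AT; rewrite tr_block_mx ZT AT trmxK. Qed.

Lemma form0 n (M : 'M[R]_n) : ((0 : 'cV[R]_n)^T *m M *m (0 : 'cV[R]_n)) 0 0 = 0.
Proof. by rewrite mulmx0 mxE. Qed.

Lemma top_form p q (a : 'M[R]_p) b c (d : 'M[R]_q) (u : 'cV[R]_p) :
  ((col_mx u (0 : 'cV[R]_q))^T *m block_mx a b c d *m col_mx u 0) 0 0
  = (u^T *m a *m u) 0 0.
Proof. by rewrite form_block trmx0 !mulmx0 !mul0mx !addr0. Qed.

Lemma one11 : (1%:M : 'M[R]_1) != 0.
Proof.
apply/negP => /eqP/matrixP/(_ 0 0); rewrite !mxE /= => /eqP.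
by rewrite oner_eq0.
Qed.

Lemma form11 (a : 'M[R]_1) : ((1%:M : 'M[R]_1)^T *m a *m 1%:M) 0 0 = a 0 0.
Proof. by rewrite trmx1 mul1mx mulmx1. Qed.

Lemma schurTL_posdef p q (Z : 'M[R]_p) (B : 'M[R]_(p, q)) (A : 'M[R]_q) :
  Z \in unitmx -> Z^T = Z -> posdef (block_mx Z B B^T A) ->
  posdef (A - B^T *m invmx Z *m B).
Proof.
move=> Zu ZT [MT HM].
have AT : A^T = A.
  by move: MT; rewrite tr_block_mx => /eq_block_mx [_ _ _ ->].
split; first exact: sym_schur.
move=> y y0.
have := HM (col_mx (- (invmx Z *m B *m y)) y).
rewrite col_mx_eq0 (negbTE y0) andbF => /(_ isT).
by rewrite schurTL // addNr form0 add0r.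
Qed.

Lemma schurTL_psd p q (Z : 'M[R]_p) (B : 'M[R]_(p, q)) (A : 'M[R]_q) :
  Z \in unitmx -> Z^T = Z -> psd (block_mx Z B B^T A) ->
  psd (A - B^T *m invmx Z *m B).
Proof.
move=> Zu ZT [MT HM].
have AT : A^T = A.
  by move: MT; rewrite tr_block_mx => /eq_block_mx [_ _ _ ->].
split; first exact: sym_schur.
move=> y.
have := HM (col_mx (- (invmx Z *m B *m y)) y).
by rewrite schurTL // addNr form0 add0r.
Qed.

Lemma det_mono_step n
  (IH : forall P N : 'M[R]_n, posdef P -> psd N -> 0 < \det P /\ \det P <= \det (P + N))
  (P N : 'M[R]_(1 + n)) : posdef P -> psd N -> 0 < \det P /\ \det P <= \det (P + N).
Proof.
have [a [b [c [d ->]]]] : exists (a : 'M[R]_1) (b : 'M[R]_(1, n)) (c : 'M[R]_(n, 1)) (d : 'M[R]_n), P = block_mx a b c d.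
  by exists (ulsubmx P), (ursubmx P), (dlsubmx P), (drsubmx P); rewrite submxK.
have [a' [b' [c' [d' ->]]]] : exists (a : 'M[R]_1) (b : 'M[R]_(1, n)) (c : 'M[R]_(n, 1)) (d : 'M[R]_n), N = block_mx a b c d.
  by exists (ulsubmx N), (ursubmx N), (dlsubmx N), (drsubmx N); rewrite submxK.
move=> [PT HP] [NT HN].
move: (PT); rewrite tr_block_mx => /eq_block_mx [aT cT bT dT].
move: (NT); rewrite tr_block_mx => /eq_block_mx [aT' cT' bT' dT'].
rewrite -bT -bT' in PT NT HP HN *.
have al : 0 < a 0 0.
  have := HP (col_mx 1%:M 0); rewrite col_mx_eq0 (negbTE one11) => /(_ isT).
  by rewrite top_form form11.
have al' : 0 <= a' 0 0.
  by have := HN (col_mx 1%:M 0); rewrite top_form form11.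
have au : a \in unitmx by rewrite unitmxE det_mx11 unitfE lt0r_neq0.
have a2u : a + a' \in unitmx.
  by rewrite unitmxE det_mx11 unitfE addE lt0r_neq0 // ltr_wpDr.
have aform (z : 'cV[R]_1) : 0 <= (z^T *m a *m z) 0 0.
  case/boolP: (z == 0) => [/eqP ->|z0]; first by rewrite form0.
  have := HP (col_mx z 0); rewrite col_mx_eq0 (negbTE z0) => /(_ isT).
  by rewrite top_form => /ltW.
set SP := d - b^T *m invmx a *m b.
have SPd : posdef SP by apply: schurTL_posdef => //; split.
have detP : \det (block_mx a b b^T d) = a 0 0 * \det SP.
  by rewrite det_schur // det_mx11.
rewrite add_block_mx -trD.
set S2 := (d + d') - (b + b')^T *m invmx (a + a') *m (b + b').
have detPN : \det (block_mx (a + a') (b + b') (b + b')^T (d + d')) = (a + a') 0 0 * \det S2.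
  by rewrite det_schur // det_mx11.
have Epsd : psd (S2 - SP).
  set T := block_mx (a + a') (b + b') (b + b')^T (d' + b^T *m invmx a *m b).
  have Tpsd : psd T.
    split.
      rewrite /T sym_blockTL //; first by rewrite trD aT aT'.
      by rewrite trD dT' !trmx_mul trmxK trmx_inv aT mulmxA.
    move=> x.
    have -> : T = block_mx a' b' b'^T d' + block_mx a b b^T (b^T *m invmx a *m b).
      by rewrite /T add_block_mx trD (addrC a') (addrC b') (addrC b'^T).
    rewrite mulmxDr mulmxDl addE.
    apply: addr_ge0; first exact: HN.
    case/boolP: (x == 0) => [/eqP ->|_]; first by rewrite form0.
    rewrite -[x]vsubmxK schurTL // subrr mulmx0 mul0mx [X in _ + X]mxE addr0.
    exact: aform.
  have := @schurTL_psd _ _ _ _ _ a2u _ Tpsd.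
  have -> : d' + b^T *m invmx a *m b - (b + b')^T *m invmx (a + a') *m (b + b') = S2 - SP.
    apply/matrixP => i j; rewrite /S2 /SP !(addE, oppE); lra.
  by apply; rewrite trD aT aT'.
have [dSP hmono] := IH _ _ SPd Epsd.
rewrite addrC subrK in hmono.
rewrite detP detPN; split; first exact: mulr_gt0.
rewrite addE; apply: ler_pM => //; [exact: ltW | exact: ltW | ].
by rewrite lerDl.
Qed.

Lemma det_mono n (P N : 'M[R]_n) : posdef P -> psd N -> 0 < \det P /\ \det P <= \det (P + N).
Proof.
elim: n P N => [|n IH] P N.
  by rewrite !det_mx00 ltr01 lexx.
exact: (@det_mono_step n IH P N).
Qed.

Lemma posdef_add n (P N : 'M[R]_n) : posdef P -> psd N -> posdef (P + N).
Proof.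
move=> [PT HP] [NT HN]; split; first by rewrite trD PT NT.
move=> x x0; rewrite mulmxDr mulmxDl addE.
by have := HN x; have := HP x x0; lra.
Qed.

Lemma psd0 n : psd (0 : 'M[R]_n).
Proof. by split; [rewrite trmx0 | move=> x; rewrite mulmx0 mul0mx mxE]. Qed.

Lemma kronI_tr K p (M : 'M[R]_p) : (kronI K M)^T = kronI K M^T.
Proof.
apply/matrixP => i j; rewrite /kronI /blockmx !mxE eq_sym.
by case: eqP => _; rewrite !mxE.
Qed.

Lemma Qmat_tr K nx (A S1 ST : 'M[R]_nx) : S1^T = S1 -> ST^T = ST ->
  (Qmat K A S1 ST)^T = Qmat K A S1 ST.
Proof.
move=> h1 h2; rewrite /Qmat trD !trmx_mul !trmxK kronI_tr h1 h2 !mulmxA //.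
Qed.

Lemma SigmaS_tr K nx ns (A S1 ST : 'M[R]_nx) (D : 'M[R]_(ns, nx)) :
  S1^T = S1 -> ST^T = ST -> (SigmaS K A S1 ST D)^T = SigmaS K A S1 ST D.
Proof.
move=> h1 h2; rewrite /SigmaS !trmx_mul trmxK Qmat_tr // !mulmxA //.
Qed.

Lemma log2_le (x y : R) : 0 < x -> x <= y -> log2 x <= log2 y.
Proof.
move=> x0 xy; rewrite /log2; apply: ler_wpM2r.
  by rewrite invr_ge0 ltW // ln_gt0 // ltr1n.
by rewrite ler_ln ?posrE //; exact: lt_le_trans xy.
Qed.

End Aux.
Arguments addE {R}.
Arguments oppE {R}.
Arguments trZ {R}.
Arguments scaleE {R}.
Arguments form_block {R}.
Arguments form_add {R}.
Arguments schurTL {R}.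
Arguments schurBR {R}.
Arguments det_schur {R}.
Arguments posdef_psd {R n P}.
Arguments posdef_unit {R n P}.
Arguments psd_unit_posdef {R n P}.
Arguments trD {R}.
Arguments trB {R}.
Arguments sym_schur {R}.
Arguments sym_blockTL {R}.
Arguments sym_blockBR {R}.
Arguments form0 {R}.
Arguments top_form {R}.
Arguments one11 {R}.
Arguments form11 {R}.
Arguments schurTL_posdef {R}.
Arguments schurTL_psd {R}.
Arguments det_mono_step {R}.
Arguments det_mono {R n P N}.
Arguments posdef_add {R n P N}.
Arguments psd0 {R}.
Arguments kronI_tr {R}.
Arguments Qmat_tr {R}.
Arguments SigmaS_tr {R}.
Arguments log2_le {R x y}.

Theorem lemma2 (R : realType) (nx ny ns K m : nat) (hK : (2 <= K)%N)
  (A : 'M[R]_nx) (C : 'M[R]_(ny, nx)) (D : 'M[R]_(ns, nx))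
  (S1 ST : 'M[R]_nx) (SW : 'M[R]_ny)
  (hD : row_free D) (hS1 : posdef S1) (hST : posdef ST) (hSW : posdef SW) :
  let SS := SigmaS K A S1 ST D in
  let c : R := log2 (\det SS) / 2 - m%:R / 2 - m%:R / 2 * log2 (2 * pi) in
  forall (SH : 'M[R]_m) (SZ : 'M[R]_(K * ny)) (G : 'M[R]_(K * ny)),
    posdef SH -> posdef SZ -> blockdiag G ->
    let SSZ := SigmaSZ K A S1 ST C D G in
    [/\ (* the cost is well defined exactly when the program has a feasible
           point in the domain of -log det *)
        posdef (SS - SSZ^T *m invmx SZ *m SSZ) <->
          (exists Pi, prog_feasible SS SSZ SZ Pi /\ 0 < \det Pi),
        (* every feasible Pi gives an upper bound *)
        (forall Pi : 'M[R]_(K * ns), prog_feasible SS SSZ SZ Pi -> 0 < \det Pi ->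
           cost SH SS SSZ SZ <= c + prog_obj SH Pi / 2)
      & (* and the bound is attained *)
        (posdef (SS - SSZ^T *m invmx SZ *m SSZ) ->
           exists Pi : 'M[R]_(K * ns), [/\ prog_feasible SS SSZ SZ Pi, 0 < \det Pi
             & cost SH SS SSZ SZ = c + prog_obj SH Pi / 2])].
Proof.
move=> SS c SH SZ G hSH hSZ hG SSZ.
have Zu := posdef_unit hSZ.
have ZT : SZ^T = SZ by case: hSZ.
have SST : SS^T = SS by apply: SigmaS_tr; [case: hS1 | case: hST].
set M := SS - SSZ^T *m invmx SZ *m SSZ.
have MT : M^T = M by apply: sym_schur.
have feasM : posdef M -> prog_feasible SS SSZ SZ M.
  move=> Mpd; split=> //; split; first exact: posdef_psd.
  have eT : (SS - M)^T = SS - M by rewrite trB SST MT.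
  split; first by apply: sym_blockBR.
  move=> x; rewrite -[x]vsubmxK schurBR //.
  have -> : SS - M - SSZ^T *m invmx SZ *m SSZ = 0.
    by apply/matrixP => i j; rewrite /M !(addE, oppE) [RHS]mxE; lra.
  rewrite mulmx0 mul0mx [X in X + _]mxE add0r.
  by case: (posdef_psd hSZ) => _; apply.
have feasP : forall Pi, prog_feasible SS SSZ SZ Pi -> psd (M - Pi).
  move=> Pi [PiT [_ [_ Hb]]]; split; first by rewrite trB MT PiT.
  move=> u; have := Hb (col_mx u (- (invmx SZ *m SSZ *m u))).
  rewrite schurBR // addNr form0 addr0.
  have -> : SS - Pi - SSZ^T *m invmx SZ *m SSZ = M - Pi.
    by apply/matrixP => i j; rewrite /M !(addE, oppE); lra.
  by [].
have posPi : forall Pi, prog_feasible SS SSZ SZ Pi -> 0 < \det Pi -> posdef Pi.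
  move=> Pi [_ [Ppsd _]] dP; apply: psd_unit_posdef => //.
  by rewrite unitmxE unitfE lt0r_neq0.
have costE : forall Pi : 'M[R]_(K * ns), cost SH SS SSZ SZ - (c + prog_obj SH Pi / 2)
    = (log2 (\det Pi) - log2 (\det M)) / 2.
  move=> Pi; rewrite /cost /mutinfo /entropyH /prog_obj /c -/M.
  set l1 := log2 _; set l2 := log2 _; set l3 := log2 _; set l4 := log2 _.
  set l5 := log2 _; lra.
split.
- split.
    move=> Mpd; exists M; split; first exact: feasM.
    by case: (det_mono Mpd (psd0 (K * ns))).
  move=> [Pi [fP dP]].
  have := posdef_add (posPi _ fP dP) (feasP _ fP).
  by rewrite addrC subrK.
- move=> Pi fP dP.
  have [_ ] := det_mono (posPi _ fP dP) (feasP _ fP).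
  rewrite addrC subrK => hle.
  have := log2_le dP hle; have := costE Pi; lra.
- move=> Mpd; exists M; split; first exact: feasM.
    by case: (det_mono Mpd (psd0 (K * ns))).
  by have := costE M; lra.
Qed.
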